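(* Let $T$ be an unmixed balanced tree of height 3. Then either $T\cong P_6$, or there exists a sequence of vertices $v_1,\dots,v_k$ such that $T\cong\mathcal{O}(P_6,(v_1,\dots,v_k))$.
   Context: For a graph, a leaf is a vertex of degree 1; the height of a vertex is its minimum distance to a leaf (isolated vertex: height 0); $V_k$ denotes the vertices of height $k$; the height of the graph is the maximum height of its vertices. A tree is balanced if no two adjacent vertices have the same height. With $N(D)=\bigcup_{v\in D}\{u: uv\in E\}$, a TD-set is $D$ with $N(D)=V$, minimal if no proper subset is a TD-set, and the graph is unmixed if all minimal TD-sets have the same size. $P_n$ is the path with vertex set $\{0,1,\dots,n\}$ and edges $\{i-1,i\}$. The operation $\mathcal{O}$: for a tree $T$ and a vertex $v$ of height $1$, $2$ or $3$ in $T$, $\mathcal{O}(T,v)$ is obtained from $T$ by adding a disjoint copy of $P_0$ and joining its vertex $0$ to $v$ if $\mathrm{height}(v)=1$; adding a disjoint copy of $P_3$ and joining its vertex $3$ to $v$ if $\mathrm{height}(v)=2$; adding a disjoint copy of $P_2$ and joining its vertex $2$ to $v$ if $\mathrm{height}(v)=3$. Iteratively, $\mathcal{O}(T,(v_1,\dots,v_n))=\mathcal{O}(\mathcal{O}(T,(v_1,\dots,v_{n-1})),v_n)$, where each $v_j$ is a vertex of height 1, 2 or 3 in $\mathcal{O}(T,(v_1,\dots,v_{j-1}))$ (new vertices relabeled to be distinct). *)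

(* Defs.v *)
From mathcomp Require Import all_boot.
Set Implicit Arguments. Unset Strict Implicit. Unset Printing Implicit Defensive.

Section Graphs.
Variable V : finType.
Implicit Types (e : rel V) (A D : {set V}) (v : V).

Definition simple_graph e : Prop := symmetric e /\ irreflexive e.

Definition nbhd e A : {set V} := [set y | [exists x in A, e x y]].

Definition deg e v : nat := #|[set y | e v y]|.
Definition is_leaf e v : bool := deg e v == 1.

Definition ball e (n : nat) v : {set V} :=
  iter n (fun A => A :|: nbhd e A) [set v].

(* height: minimum distance to a leaf; isolated vertex has height 0.
   (Distances are < #|V|; the value is only meaningful when some leaf is
   reachable, which is always the case in a tree with >= 2 vertices.) *)
Definition height e v : nat :=
  if deg e v == 0 then 0
  else find (fun n => [exists u in ball e n v, is_leaf e u]) (iota 0 #|V|).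

Definition graph_height e : nat := \max_(v : V) height e v.

Definition balanced e : Prop :=
  forall u w, e u w -> height e u <> height e w.

Definition connected_graph e : Prop := forall u w, connect e u w.
Definition acyclic e : Prop :=
  forall c : seq V, uniq c -> 3 <= size c -> ~~ cycle e c.
Definition is_tree e : Prop := [/\ simple_graph e, 0 < #|V|, connected_graph e & acyclic e].

Definition TDset e D : Prop := nbhd e D = [set: V].
Definition minimal_TDset e D : Prop :=
  TDset e D /\ forall D', D' \proper D -> ~ TDset e D'.
Definition unmixed e : Prop :=
  forall D1 D2, minimal_TDset e D1 -> minimal_TDset e D2 -> #|D1| = #|D2|.
End Graphs.

Definition isomorphic (V W : finType) (e : rel V) (e' : rel W) : Prop :=
  exists f : V -> W, bijective f /\ forall x y, e x y = e' (f x) (f y).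

(* the path P_n on {0,...,n} : vertex type 'I_(n+1) *)
Definition path_rel (k : nat) : rel 'I_k :=
  fun i j => (i.+1 == j :> nat) || (j.+1 == i :> nat).
Definition P6 : rel 'I_7 := @path_rel 7.

(* add a disjoint copy of P_(k-1) (vertex set 'I_k) and join its vertex a to v *)
Definition attach (V : finType) (e : rel V) (v : V) (k : nat) (a : 'I_k)
  : rel (V + 'I_k) :=
  fun x y => match x, y with
  | inl x, inl y => e x y
  | inr i, inr j => path_rel i j
  | inl x, inr j => (x == v) && (j == a)
  | inr i, inl y => (i == a) && (y == v)
  end.

Definition O1 (V : finType) (e : rel V) (v : V) := attach e v (@Ordinal 1 0 isT).
Definition O2 (V : finType) (e : rel V) (v : V) := attach e v (@Ordinal 4 3 isT).
Definition O3 (V : finType) (e : rel V) (v : V) := attach e v (@Ordinal 3 2 isT).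

(* O_reach V e  <->  e = O(P_6, (v_1,...,v_k)) for some k >= 0 and some
   admissible sequence of vertices v_1,...,v_k. *)
Inductive O_reach : forall V : finType, rel V -> Prop :=
| OR_base : O_reach P6
| OR_h1 (V : finType) (e : rel V) (v : V) :
    O_reach e -> height e v = 1 -> O_reach (O1 e v)
| OR_h2 (V : finType) (e : rel V) (v : V) :
    O_reach e -> height e v = 2 -> O_reach (O2 e v)
| OR_h3 (V : finType) (e : rel V) (v : V) :
    O_reach e -> height e v = 3 -> O_reach (O3 e v).

(* Main.v *)
Require Import Defs.
From mathcomp Require Import all_boot.
From mathcomp Require Import zify.
From Stdlib Require Import Classical.
Set Implicit Arguments. Unset Strict Implicit. Unset Printing Implicit Defensive.

Ltac clean := repeat match goal with
 | H : is_true ?b |- _ => lazymatch b with leq _ _ => fail | _ => clear H end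
 end.
Ltac slia := clean; lia.

Section Balls.
Variable V : finType.
Variable e : rel V.

Lemma nbhdP (A : {set V}) y : reflect (exists2 x, x \in A & e x y) (y \in nbhd e A).
Proof. rewrite inE; apply: (iffP existsP) => [[x /andP[]]|[x H1 H2]]; first by exists x.
by exists x; rewrite H1. Qed.

Lemma nbhdS (A B : {set V}) : A \subset B -> nbhd e A \subset nbhd e B.
Proof. move=> /subsetP sAB; apply/subsetP => y /nbhdP[x xA exy]; apply/nbhdP; exists x => //; exact: sAB. Qed.

Lemma ball0 v : ball e 0 v = [set v]. Proof. by []. Qed.
Lemma ballS n v : ball e n.+1 v = ball e n v :|: nbhd e (ball e n v).
Proof. by rewrite /ball iterS. Qed.

Lemma ball_self n v : v \in ball e n v.
Proof. elim: n => [|n IH]; first by rewrite ball0 set11. by rewrite ballS inE IH. Qed.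

Lemma ball_mono m n v : m <= n -> ball e m v \subset ball e n v.
Proof.
elim: n => [|n IH]; first by rewrite leqn0 => /eqP ->.
rewrite leq_eqVlt => /orP[/eqP ->//|/IH H]; rewrite ballS; exact: subset_trans H (subsetUl _ _).
Qed.

Lemma ball_trans m n x y : x \in ball e m y -> ball e n x \subset ball e (m + n) y.
Proof.
move=> xy; elim: n => [|n IH]; first by rewrite ball0 addn0 sub1set.
rewrite ballS addnS ballS; apply: setUSS => //; exact: nbhdS.
Qed.

Lemma ball1 v u : e v u -> u \in ball e 1 v.
Proof. move=> evu; rewrite ballS inE; apply/orP; right; apply/nbhdP; exists v => //; exact: ball_self. Qed.

Lemma ball_first n v u : u \in ball e n.+1 v ->
  u \in ball e n v \/ exists2 q, e v q & u \in ball e n q.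
Proof.
elim: n u => [|n IH] u.
  rewrite ballS inE ball0 => /orP[->|/nbhdP[x]]; first by left.
  rewrite inE => /eqP -> evu; right; exists u => //; exact: ball_self.
rewrite ballS inE => /orP[/IH [H|[q H1 H2]]|/nbhdP[x /IH [H|[q H1 H2]] exu]].
- by left; rewrite ballS inE H.
- by right; exists q => //; rewrite ballS inE H2.
- by left; rewrite ballS inE; apply/orP; right; apply/nbhdP; exists x.
- by right; exists q => //; rewrite ballS inE; apply/orP; right; apply/nbhdP; exists x.
Qed.

Lemma path_ball x p : path e x p -> last x p \in ball e (size p) x.
Proof.
elim: p x => [|z p IH] x /=; first by move=> _; rewrite set11.
move=> /andP[exz /IH H]; have := ball_trans (size p) (ball1 exz).
by move/subsetP; apply.
Qed.

Lemma connect_ball x y : connect e x y -> exists n, y \in ball e n x.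
Proof. by move=> /connectP[p pth ->]; exists (size p); exact: path_ball. Qed.

End Balls.

Lemma descent_bound (V : finType) (h : V -> nat) :
  (forall v, 0 < h v -> exists u, (h u).+1 = h v) -> forall v, h v < #|V|.
Proof.
move=> desc v.
have img : forall n w, h w = n -> forall k, k <= n -> k \in [seq h x | x <- enum V].
  elim=> [|n IH] w hw k.
    rewrite leqn0 => /eqP ->; rewrite -hw; apply/mapP; exists w => //; by rewrite mem_enum.
  rewrite leq_eqVlt => /orP[/eqP ->|].
    rewrite -hw; apply/mapP; exists w => //; by rewrite mem_enum.
  have hw0 : 0 < h w by rewrite hw.
  have [u hu] := desc w hw0.
  rewrite ltnS; apply: (IH u); lia.
have := uniq_leq_size (iota_uniq 0 (h v).+1) (s2:= [seq h x | x <- enum V]).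
rewrite size_iota size_map -cardE; apply => k; rewrite mem_iota add0n => /andP[_ hk].
apply: (img _ v erefl); by rewrite -ltnS.
Qed.

Lemma find_iota_eq (P : pred nat) N n : n < N -> P n -> (forall m, m < n -> ~~ P m) ->
  find P (iota 0 N) = n.
Proof.
move=> nN Pn Hm.
have hs : has P (iota 0 N) by apply/hasP; exists n => //; rewrite mem_iota.
have := nth_find 0 hs; rewrite has_find size_iota in hs.
rewrite nth_iota // add0n => Pf.
case: (ltngtP (find P (iota 0 N)) n) => // H.
- by move: (Hm _ H); rewrite Pf.
- by move: (before_find 0 H); rewrite nth_iota // add0n Pn.
Qed.

Section Height.
Variable V : finType.
Variable e : rel V.

Lemma height_char (h : V -> nat) :
  (forall v, exists u, e v u) ->
  (forall v, h v = 0 <-> is_leaf e v) ->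
  (forall v, 0 < h v -> exists u, e v u /\ (h u).+1 = h v) ->
  (forall u v, e u v -> h u <= (h v).+1) ->
  forall v, height e v = h v.
Proof.
move=> nbr hleaf desc lip v.
have dpos : deg e v != 0.
  have [u evu] := nbr v; rewrite /deg cards_eq0; apply/eqP => H.
  by have := in_set0 u; rewrite -H inE evu.
rewrite /height (negbTE dpos).
apply: find_iota_eq.
- apply: descent_bound => w /desc [u [_ hu]]; by exists u.
- have : forall n w, h w = n -> exists2 u, u \in ball e n w & h u = 0.
    elim=> [|n IH] w hw; first by exists w; [exact: ball_self|].
    have hw0 : 0 < h w by rewrite hw.
    have [q [ewq hq]] := desc w hw0.
    have hq' : h q = n by apply: succn_inj; rewrite hq hw.
    have [u uq hu] := IH q hq'.
    exists u => //. have := ball_trans n (ball1 ewq). rewrite add1n. by move/subsetP; apply.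
  move=> /(_ (h v) v erefl) [u uv hu]; apply/existsP; exists u; rewrite uv /=; by apply/(hleaf u).
- move=> m mlt; apply/existsP => [[u /andP[uv lu]]].
  have key : forall n w, w \in ball e n v -> h v <= h w + n.
    elim=> [|n IH] w; first by rewrite ball0 inE => /eqP ->; rewrite addn0.
    rewrite ballS inE => /orP[/IH|/nbhdP[x /IH hx exw]]; first lia.
    have := lip x w exw; lia.
  have := key _ _ uv; have := (proj2 (hleaf u) lu); lia.
Qed.

Lemma leaf_height0 v : is_leaf e v -> height e v = 0.
Proof.
move=> lv; rewrite /height; case: ifP => // _.
have : 0 < #|V| by apply/card_gt0P; exists v.
case: #|V| => // n _ /=.
have -> : [exists u in ball e 0 v, is_leaf e u] by apply/existsP; exists v; rewrite ball0 set11.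
by [].
Qed.

Lemma height_iso (W : finType) (e' : rel W) (f : V -> W) : bijective f ->
  (forall x y, e x y = e' (f x) (f y)) -> forall v, height e v = height e' (f v).
Proof.
move=> bf He.
have fi : injective f := bij_inj bf.
have [g fg gf] := bf.
have nb x : [set y | e' (f x) y] = f @: [set y | e x y].
  apply/setP => y; rewrite inE; apply/idP/imsetP => [H|[z]].
    by exists (g y); rewrite ?inE ?He gf.
  by rewrite inE He => H ->.
have dg x : deg e' (f x) = deg e x by rewrite /deg nb card_imset.
have lf x : is_leaf e' (f x) = is_leaf e x by rewrite /is_leaf dg.
have nbI (A : {set V}) : nbhd e' (f @: A) = f @: nbhd e A.
  apply/setP => y; apply/nbhdP/imsetP => [[x /imsetP[z zA ->] H]|[z /nbhdP[x xA H] ->]].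
    by exists (g y); [apply/nbhdP; exists z => //; rewrite He gf|rewrite gf].
  by exists (f x); [exact: imset_f|rewrite -He].
have bl n v : ball e' n (f v) = f @: ball e n v.
  elim: n => [|n IH]; first by rewrite !ball0 imset_set1.
  by rewrite !ballS IH imsetU nbI.
move=> v; rewrite /height dg (bij_eq_card bf).
case: ifP => // _; apply: eq_find => n /=.
apply/existsP/existsP => [[u /andP[H1 H2]]|[u /andP[H1 H2]]].
  by exists (f u); rewrite bl imset_f // lf.
move: H1 H2; rewrite bl => /imsetP[z zb ->]; rewrite lf => lz; exists z; by rewrite zb lz.
Qed.

End Height.

Definition avoid (V : finType) (e : rel V) (u : V) : rel V :=
  fun i j => [&& e i j, i != u & j != u].

Lemma closed_all (V : finType) (e : rel V) (K : {set V}) x : x \in K ->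
  (forall u v, u \in K -> e u v -> v \in K) -> (forall u w, connect e u w) -> forall v, v \in K.
Proof.
move=> xK cl conn v; have /connectP[p pth ->] := conn x v.
elim: p x xK pth => [|z p IH] x xK //= /andP[exz pth]; apply: (IH z) => //; exact: cl exz.
Qed.

Section Tree.
Variable V : finType.
Variable e : rel V.
Hypothesis esym : symmetric e.
Hypothesis eirr : irreflexive e.
Hypothesis eacyc : acyclic e.

Lemma avoid_sym u : symmetric (avoid e u).
Proof. by move=> i j; rewrite /avoid esym; case: (e j i); case: (i != u); case: (j != u). Qed.

Lemma adj_neq u v : e u v -> u != v.
Proof. by apply: contraTneq => ->; rewrite eirr. Qed.

Lemma path_avoid_notin u p s : path (avoid e u) p s -> u \notin s.
Proof.
elim: s p => [|z s IH] p //= /andP[/and3P[_ _ zu] /IH H].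
by rewrite inE negb_or eq_sym zu H.
Qed.

Lemma no_avoid u p q : e u p -> e u q -> p != q -> ~~ connect (avoid e u) p q.
Proof.
move=> eup euq pq; apply/negP => /connectP[s pth].
case: (shortenP pth) => s' pth' uq' _ qe.
have nu : u \notin p :: s'.
  by rewrite inE negb_or adj_neq //= (path_avoid_notin pth').
have sz : 3 <= size (u :: p :: s').
  by case: s' {pth' uq' nu} qe => [/= qp|]; [move: pq; rewrite qp eqxx|].
have uc : uniq (u :: p :: s') by rewrite cons_uniq nu uq'.
have := eacyc uc sz; apply/negP; apply/negPn.
rewrite /= eup rcons_path -qe esym euq andbT.
apply: sub_path pth' => i j /and3P[] //.
Qed.

Section Dist.
Variable r : V.
Hypothesis conn : forall u, connect e r u.

Definition dist u := ex_minn (connect_ball (conn u)).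

Lemma dist_ball u : u \in ball e (dist u) r.
Proof using All. by rewrite /dist; case: ex_minnP. Qed.

Lemma dist_min u n : u \in ball e n r -> dist u <= n.
Proof using All. by rewrite /dist; case: ex_minnP => m _ H /H. Qed.

Lemma dist_r : dist r = 0.
Proof using All. by apply/eqP; rewrite -leqn0; apply: dist_min; rewrite ball0 set11. Qed.

Lemma dist0 u : dist u = 0 -> u = r.
Proof using All. by move=> H; have := dist_ball u; rewrite H ball0 inE => /eqP. Qed.

Lemma dist_lip u v : e u v -> dist v <= (dist u).+1.
Proof using All.
move=> euv; apply: dist_min; have := ball_trans 1 (dist_ball u).
rewrite addn1 => /subsetP; apply; exact: ball1.
Qed.

Lemma dist_parent u : u != r -> exists q, e u q /\ (dist q).+1 = dist u.
Proof using All.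
move=> ur; case Hd: (dist u) => [|n]; first by move: ur; rewrite (dist0 Hd) eqxx.
have := dist_ball u; rewrite Hd ballS inE => /orP[/dist_min|/nbhdP[x xb exu]]; first lia.
exists x; split; first by rewrite esym.
have := dist_min xb; have := dist_lip exu; lia.
Qed.

Lemma desc_conn u q : dist q < dist u -> connect (avoid e u) q r.
Proof using All.
have : forall n q, dist q <= n -> dist q < dist u -> connect (avoid e u) q r.
  elim=> [|n IH] q'.
    by rewrite leqn0 => /eqP /dist0 -> _; exact: connect0.
  move=> H1 H2; case: (eqVneq q' r) => [->|qr]; first exact: connect0.
  have [p [eqp hp]] := dist_parent qr.
  apply: connect_trans (IH p _ _); [apply: connect1|lia|lia].
  rewrite /avoid eqp /=; apply/andP; split; apply/eqP => E; move: H2 hp; rewrite E; lia.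
by move=> H; apply: H; exact: leqnn.
Qed.

Lemma parent_uniq v q1 q2 : e v q1 -> e v q2 ->
  (dist q1).+1 = dist v -> (dist q2).+1 = dist v -> q1 = q2.
Proof using All.
move=> e1 e2 h1 h2; apply/eqP; apply/negPn/negP => nq.
have := no_avoid e1 e2 nq; apply/negP/negPn.
apply: connect_trans (desc_conn (u:=v) _) _; first lia.
rewrite (sym_connect_sym (@avoid_sym v)); apply: desc_conn; lia.
Qed.

Lemma dist_adj u v : e u v -> dist v = (dist u).+1 \/ dist u = (dist v).+1.
Proof using All.
move=> euv; have l1 := dist_lip euv; have l2 := dist_lip (u:=v) (v:=u); rewrite esym in l2.
have l2' := l2 euv.
suff : dist u != dist v by lia.
apply/eqP => E.
case: (eqVneq u r) => [ur|ur].
  have vr : v = r by apply: dist0; rewrite -E ur dist_r.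
  by move: euv; rewrite ur vr eirr.
have [pu [epu hpu]] := dist_parent ur.
have vr : v != r by apply/eqP => vr; move: E; rewrite vr dist_r => /dist0 /eqP; rewrite (negbTE ur).
have [pv [epv hpv]] := dist_parent vr.
have npv : pu != v by apply/eqP => F; move: hpu; rewrite F E; lia.
have := no_avoid epu euv npv; apply/negP/negPn.
apply: connect_trans (desc_conn (u:=u) _) _; first lia.
rewrite (sym_connect_sym (@avoid_sym u)).
apply: connect_trans (connect1 _) (desc_conn (u:=u) (q:=pv) _); last lia.
have vu : v != u by rewrite eq_sym adj_neq.
rewrite /avoid epv vu /=.
by apply/eqP => F; move: hpv; rewrite F E; lia.
Qed.

Lemma far_vertex : (exists q, e r q) -> exists m, m != r /\ forall y, dist y <= dist m.
Proof using All.
move=> [q erq].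
exists [arg max_(i > r) dist i]; case: arg_maxnP => // m _ H; split; last by move=> y; exact: H.
apply/eqP => mr; have := H q isT; rewrite mr dist_r.
have : dist q != 0 by apply/eqP => /dist0 qr; move: erq; rewrite qr eirr.
lia.
Qed.

Lemma far_nbr m y : (forall y, dist y <= dist m) -> e m y -> (dist y).+1 = dist m.
Proof using All. move=> H emy; have := H y; case: (dist_adj emy); lia. Qed.

Lemma far_leaf m : m != r -> (forall y, dist y <= dist m) -> is_leaf e m.
Proof using All.
move=> mr H; have [p [emp hp]] := dist_parent mr.
rewrite /is_leaf /deg; apply/eqP.
suff -> : [set y | e m y] = [set p] by rewrite cards1.
apply/setP => y; rewrite !inE; apply/idP/eqP => [emy|->//].
apply: (parent_uniq emy emp) => //; exact: far_nbr.
Qed.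

End Dist.
End Tree.

Record Base (V : finType) (e : rel V) : Prop := Base_intro {
 b_sym : symmetric e; b_irr : irreflexive e; b_acyc : acyclic e; b_conn : connected_graph e;
 b_le3 : forall v, height e v <= 3;
 b_adj : forall u v, e u v -> height e u = (height e v).+1 \/ height e v = (height e u).+1;
 b_leaf : forall v, height e v = 0 -> is_leaf e v;
 b_desc : forall v, 0 < height e v -> exists u, e v u /\ (height e u).+1 = height e v;
 b_ex3 : exists v, height e v = 3 }.

Record Sig (V : finType) (e : rel V) : Prop := Sig_intro {
 s_base : Base e;
 s_u12 : forall v u1 u2, height e v = 1 -> e v u1 -> e v u2 -> height e u1 = 2 -> height e u2 = 2 -> u1 = u2;
 s_e12 : forall v, height e v = 1 -> exists u, e v u /\ height e u = 2;
 s_u21 : forall v u1 u2, height e v = 2 -> e v u1 -> e v u2 -> height e u1 = 1 -> height e u2 = 1 -> u1 = u2 }.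

Lemma base_of_tree (V : finType) (e : rel V) :
  is_tree e -> balanced e -> graph_height e = 3 -> Base e.
Proof.
move=> [[esym eirr] V0 conn acyc] bal gh.
have le3 v : height e v <= 3.
  rewrite -gh /graph_height; exact: leq_bigmax.
have [v3 hv3] : exists v, height e v = 3.
  have [v Hv] := eq_bigmax (fun v => height e v) V0; by exists v; rewrite -Hv.
have [q eq3] : exists q, e v3 q.
  move: hv3; rewrite /height; case: ifP => // /negbT; rewrite /deg cards_eq0 => /set0Pn [q].
  by rewrite inE => ? _; exists q.
have conn3 : forall u, connect e v3 u by move=> u; exact: conn.
have [l [lr lmax]] := @far_vertex V e esym eirr acyc v3 conn3 (ex_intro _ q eq3).
have ll := @far_leaf V e esym eirr acyc v3 conn3 l lr lmax.
have nbr : forall u, exists w, e u w.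
  move=> u; case: (eqVneq u v3) => [->|uv]; first by exists q.
  have /connectP[p pth E] := conn u v3.
  case: p pth E => [/= _ E|z p /= /andP[euz _] _]; first by move: uv; rewrite E eqxx.
  by exists z.
have Hex : forall u, exists n, [exists y in ball e n u, is_leaf e y].
  move=> u; have [n Hn] := connect_ball (conn u l); exists n; apply/existsP; exists l; by rewrite Hn ll.
pose hl u := ex_minn (Hex u).
have hl_ball u : [exists y in ball e (hl u) u, is_leaf e y] by rewrite /hl; case: ex_minnP.
have hl_min u n : [exists y in ball e n u, is_leaf e y] -> hl u <= n.
  by rewrite /hl; case: ex_minnP => m _ H /H.
have hl_lip u v : e u v -> hl u <= (hl v).+1.
  move=> euv; apply: hl_min; have /existsP[y /andP[yb ly]] := hl_ball v.
  apply/existsP; exists y; rewrite ly andbT.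
  by have /subsetP := ball_trans (hl v) (ball1 euv); rewrite add1n; apply.
have hl_desc v : 0 < hl v -> exists u, e v u /\ (hl u).+1 = hl v.
  case Hv: (hl v) => [|n] // _.
  have /existsP[y /andP[yb ly]] := hl_ball v; rewrite Hv in yb.
  case: (ball_first yb) => [yb'|[u evu yb']].
    have : hl v <= n by apply: hl_min; apply/existsP; exists y; rewrite yb' ly.
    lia.
  exists u; split => //.
  have : hl u <= n by apply: hl_min; apply/existsP; exists y; rewrite yb' ly.
  have := hl_lip v u evu; lia.
have hl0 v : hl v = 0 <-> is_leaf e v.
  split => [H|lv]; last by apply/eqP; rewrite -leqn0; apply: hl_min; apply/existsP; exists v; rewrite ball_self lv.
  have /existsP[y /andP[yb ly]] := hl_ball v; move: yb; rewrite H ball0 inE => /eqP <-; exact: ly.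
have hE := height_char nbr hl0 hl_desc hl_lip.
split => //.
- move=> u v euv; rewrite !hE; have := hl_lip u v euv; have := hl_lip v u; rewrite esym => /(_ euv).
  have := bal u v euv; rewrite !hE; lia.
- by move=> v; rewrite hE => /hl0.
- by move=> v; rewrite !hE => /hl_desc [u [evu H]]; exists u; rewrite hE.
- by exists v3.
Qed.

Lemma minimal_sub (V : finType) (P : {set V} -> Prop) (D : {set V}) : P D ->
  exists D' : {set V}, [/\ D' \subset D, P D' & forall D'' : {set V}, D'' \proper D' -> ~ P D''].
Proof.
move: {2}#|D| (leqnn #|D|) => n; elim: n D => [|n IH] D.
  rewrite leqn0 => /eqP D0 PD; exists D; split => // D'' /proper_card; lia.
move=> Dn PD; case: (classic (exists D'' : {set V}, D'' \proper D /\ P D'')) => [[D'' [pr PD'']]|H].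
  have := proper_card pr => c.
  have [D' [s1 s2 s3]] := IH D'' (ltac:(lia)) PD''.
  by exists D'; split => //; apply: subset_trans s1 (proper_sub pr).
by exists D; split => // D'' pr PD''; apply: H; exists D''.
Qed.

Lemma unmixed_contra (V : finType) (e : rel V) (D D' : {set V}) :
  unmixed e -> minimal_TDset e D -> TDset e D' -> #|D'| < #|D| -> False.
Proof.
move=> um mD tD' lt.
have [D'' [s1 s2 s3]] := minimal_sub tD'.
have := um _ _ mD (conj s2 s3); have := subset_leq_card s1; lia.
Qed.

Section BaseFacts.
Variable V : finType.
Variable e : rel V.
Hypothesis B : Base e.
Local Notation h := (height e).

Lemma esymB : symmetric e. Proof. exact: b_sym B. Qed.
Lemma eirrB : irreflexive e. Proof. exact: b_irr B. Qed.

Lemma leaf_uniq l x y : is_leaf e l -> e l x -> e l y -> x = y.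
Proof.
rewrite /is_leaf /deg => /cards1P [z Hz] ex ey.
have : x \in [set y | e l y] by rewrite inE.
have : y \in [set y | e l y] by rewrite inE.
by rewrite Hz !inE => /eqP -> /eqP ->.
Qed.

Lemma leafE v : is_leaf e v = (h v == 0).
Proof.
apply/idP/eqP; first exact: leaf_height0.
by move=> H; apply: (b_leaf B H).
Qed.

Lemma other_nbr v a : 0 < h v -> e v a -> exists2 b, e v b & b != a.
Proof.
move=> hv eva; case: (classic (exists2 b, e v b & b != a)) => // H.
have : is_leaf e v.
  rewrite /is_leaf /deg; apply/cards1P; exists a; apply/setP => y; rewrite !inE.
  apply/idP/eqP => [eby|->//]; apply/eqP/negPn/negP => ya; apply: H; by exists y.
rewrite leafE; lia.
Qed.

Lemma hadj u v : e u v -> h u = (h v).+1 \/ h v = (h u).+1.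
Proof. by move=> H; apply: (b_adj B H). Qed.

Lemma hle3 v : h v <= 3. Proof. by apply: (b_le3 B). Qed.

Lemma hdesc v : 0 < h v -> exists u, e v u /\ (h u).+1 = h v.
Proof. by move=> H; apply: (b_desc B H). Qed.

Lemma has_nbr v : exists u, e v u.
Proof.
case Hv: (h v) => [|n].
  have : is_leaf e v by rewrite leafE Hv.
  rewrite /is_leaf /deg => /cards1P [z Hz]; exists z.
  have : z \in [set y | e v y] by rewrite Hz set11.
  by rewrite inE.
by have [u [evu _]] := hdesc (ltac:(lia) : 0 < h v); exists u.
Qed.


Definition lf q := odflt q [pick l | e q l && (h l == 0)].

Lemma lf_spec q : h q = 1 -> e q (lf q) /\ h (lf q) = 0.
Proof.
move=> hq; have [u [equ hu]] := hdesc (ltac:(lia) : 0 < h q).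
rewrite /lf; case: pickP => [l /andP[eql /eqP hl]|H] //=.
have hu0 : h u == 0 by apply/eqP; lia.
by have := H u; rewrite equ hu0.
Qed.

Definition V1 := [set q | h q == 1].
Definition DS (S : {set V}) := V1 :|: S :|: lf @: (V1 :\: nbhd e S).

Definition dom3 (S : {set V}) := forall u, h u = 3 -> exists2 s, s \in S & e s u.

Lemma DS_TD (S : {set V}) : dom3 S -> TDset e (DS S).
Proof.
move=> dS; apply/setP => u; rewrite in_setT; apply/nbhdP.
have := hle3 u; case Hu: (h u) => [|[|[|[|n]]]] // _.
- have [w ew] := has_nbr u; exists w; last by rewrite esymB.
  rewrite !inE; case: (hadj ew); rewrite Hu => // ->; by rewrite eqxx.
- case: (boolP (u \in nbhd e S)) => [/nbhdP[s sS esu]|uN].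
    by exists s => //; rewrite !inE sS orbT.
  have [e1 _] := lf_spec Hu; exists (lf u); last by rewrite esymB.
  rewrite !inE; apply/orP; right; apply: imset_f; by rewrite in_setD uN inE Hu.
- have [w [ew hw]] := hdesc (ltac:(lia) : 0 < h u); exists w; last by rewrite esymB.
  by rewrite !inE; apply/orP; left; apply/orP; left; apply/eqP; lia.
- have [s sS esu] := dS u Hu; exists s => //; by rewrite !inE sS orbT.
Qed.

Lemma DS_card_le (S : {set V}) : #|DS S| <= #|V1| + #|S| + #|V1 :\: nbhd e S|.
Proof.
rewrite /DS; have := leq_imset_card lf (V1 :\: nbhd e S).
have := cardsU (V1 :|: S) (lf @: (V1 :\: nbhd e S)).
have := cardsU V1 S. lia.
Qed.

Lemma lf_inj : {in V1 &, injective lf}.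
Proof.
move=> q1 q2; rewrite !inE => /eqP h1 /eqP h2 E.
have [e1 l1] := lf_spec h1; have [e2 l2] := lf_spec h2.
have ll : is_leaf e (lf q1) by rewrite leafE l1.
apply: (leaf_uniq ll); first by rewrite esymB.
by rewrite E esymB.
Qed.

Lemma DS_card_eq (S : {set V}) : {in S, forall s, h s = 2} ->
  #|DS S| = #|V1| + #|S| + #|V1 :\: nbhd e S|.
Proof.
move=> hS.
have i1 : V1 :&: S = set0.
  apply/setP => x; rewrite !inE; apply/negbTE; apply/negP => /andP[/eqP hx xS].
  by move: (hS x xS); rewrite hx.
have i2 : (V1 :|: S) :&: lf @: (V1 :\: nbhd e S) = set0.
  apply/setP => x; rewrite !inE; apply/negbTE; apply/negP => /andP[H /imsetP[q]].
  rewrite !inE => /andP[_ /eqP hq] xq; have [_ l0] := lf_spec hq.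
  move: H; rewrite xq => /orP[/eqP|/hS]; lia.
have c3 : #|lf @: (V1 :\: nbhd e S)| = #|V1 :\: nbhd e S|.
  apply: card_in_imset => q1 q2 /setDP[H1 _] /setDP[H2 _]; exact: lf_inj.
rewrite /DS cardsU i2 cards0 subn0 c3 cardsU i1 cards0 subn0; done.
Qed.

Lemma DS_private (S : {set V}) : {in S, forall s, h s = 2} ->
  (forall s, s \in S -> exists u, [/\ e s u, h u = 1 \/ h u = 3 &
                                  forall s', s' \in S -> e s' u -> s' = s]) ->
  forall v, v \in DS S -> exists u, forall t, t \in DS S -> e t u -> t = v.
Proof.
move=> hS priv v; rewrite /DS !inE => /orP[/orP[/eqP hv|vS]|/imsetP[q]].
- have [e1 l1] := lf_spec hv; exists (lf v) => t _ et.
  have ll : is_leaf e (lf v) by rewrite leafE l1.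
  by apply: (leaf_uniq ll); rewrite esymB.
- have [u [esu hu uniq]] := priv v vS; exists u => t; rewrite !inE => /orP[/orP[/eqP ht|tS]|/imsetP[q]].
  + move=> etu; case: (hadj etu); lia.
  + by move=> etu; apply: uniq.
  + rewrite !inE => /andP[qN /eqP hq] ->; have [e1 l1] := lf_spec hq => elu.
    have ll : is_leaf e (lf q) by rewrite leafE l1.
    have uq : u = q by apply: (leaf_uniq ll); rewrite // esymB.
    by move: qN; rewrite -uq; case/negP; apply/existsP; exists v; rewrite vS esu.
- rewrite !inE => /andP[qN /eqP hq] ->; exists q => t; rewrite !inE.
  move=> /orP[/orP[/eqP ht|tS]|/imsetP[q']].
  + move=> etq; case: (hadj etq); lia.
  + by move=> etq; case/negP: qN; apply/existsP; exists t; rewrite tS etq.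
  + rewrite !inE => /andP[_ /eqP hq'] -> elq.
    have [e1 l1] := lf_spec hq'.
    have ll : is_leaf e (lf q') by rewrite leafE l1.
    have -> // : q' = q by apply: (leaf_uniq ll); rewrite // esymB.
Qed.

Lemma DS_min (S : {set V}) : {in S, forall s, h s = 2} -> dom3 S ->
  (forall s, s \in S -> exists u, [/\ e s u, h u = 1 \/ h u = 3 &
                                  forall s', s' \in S -> e s' u -> s' = s]) ->
  minimal_TDset e (DS S).
Proof.
move=> hS dS priv; split; first exact: DS_TD.
move=> D' /properP[sub [v vD vD']] TD'.
have [u Hu] := DS_private hS priv vD.
have : u \in nbhd e D' by rewrite TD' inE.
case/nbhdP => t tD' etu; have tD : t \in DS S by apply: (subsetP sub).
by move: vD'; rewrite -(Hu t tD etu) tD'.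
Qed.

End BaseFacts.

Lemma card_D2 (V : finType) (X : {set V}) a b : a \in X -> b \in X -> a != b ->
  #|(X :\ a) :\ b| + 2 = #|X|.
Proof.
move=> aX bX ab; rewrite (cardsD1 a X) aX (cardsD1 b (X :\ a)) in_setD1 eq_sym ab bX /=; slia.
Qed.

Section Unmixed.
Variable V : finType.
Variable e : rel V.
Hypothesis B : Base e.
Hypothesis um : unmixed e.
Local Notation h := (height e).
Let esym := esymB B.
Let eirr := eirrB B.
Let acyc := b_acyc B.

Lemma avoid_h u i j : e i j -> h i != h u -> h j != h u -> avoid e u i j.
Proof.
move=> eij hi hj; rewrite /avoid eij /=; apply/andP; split.
  by apply: contra hi => /eqP ->.
by apply: contra hj => /eqP ->.
Qed.

Lemma nbr_of3 u t : h u = 3 -> e u t -> h t = 2.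
Proof. move=> hu eut; have := hle3 B t; case: (hadj B eut); slia. Qed.

Lemma nbr_of0 u t : h u = 0 -> e u t -> h t = 1.
Proof. move=> hu eut; case: (hadj B eut); slia. Qed.

Lemma privates_of_min (S : {set V}) :
  dom3 e S -> (forall D'' : {set V}, D'' \proper S -> ~ dom3 e D'') ->
  forall s, s \in S -> exists u, [/\ e s u, h u = 1 \/ h u = 3 &
                                 forall s', s' \in S -> e s' u -> s' = s].
Proof.
move=> dS minS s sS; have nd := minS _ (properD1 sS).
have [u [hu nu]] : exists u, h u = 3 /\ ~ (exists2 s', s' \in S :\ s & e s' u).
  apply: NNPP => H; apply: nd => u hu; apply: NNPP => H2; apply: H; by exists u.
have uq : forall s', s' \in S -> e s' u -> s' = s.
  move=> s' s'S es'u; apply/eqP/negPn/negP => ns; apply: nu; exists s' => //.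
  by rewrite in_setD1 ns s'S.
have [s'' s''S es''u] := dS u hu.
exists u; split; [by rewrite -(uq _ s''S es''u)|by right|exact: uq].
Qed.

Lemma caseB x a b : h x = 2 -> e x a -> e x b -> h a = 1 -> h b = 1 -> a = b.
Proof.
move=> hx exa exb ha hb; apply/eqP/negPn/negP => ab.
pose W := [set s | (h s == 2) && ~~ e s a && ~~ e s b].
have notW t : h t = 2 -> t \notin W -> exists c, [/\ e t c, e x c & h c = 1].
  move=> ht; rewrite inE ht eqxx /= negb_and !negbK => /orP[eta|etb].
    by exists a.
  by exists b.
have dW : dom3 e W.
  move=> u hu; have [p [eup hp]] := hdesc B (ltac:(slia) : 0 < h u).
  have [q euq qp] := other_nbr B (ltac:(slia) : 0 < h u) eup.
  have hq := nbr_of3 hu euq.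
  case: (boolP (p \in W)) => pW; first by exists p; rewrite // esym.
  case: (boolP (q \in W)) => qW; first by exists q; rewrite // esym.
  exfalso.
  have [cp [e1 e2 e3]] := notW p (ltac:(slia)) pW.
  have [cq [f1 f2 f3]] := notW q hq qW.
  have pq : p != q by rewrite eq_sym.
  have := no_avoid esym eirr acyc eup euq pq; apply/negP/negPn.
  have n3 t : h t != 3 -> t != u by move=> H; apply/eqP => E; move: H; rewrite E hu.
  have hp2 : h p = 2 by slia.
  have pu : p != u by apply: n3; rewrite hp2.
  have qu : q != u by apply: n3; rewrite hq.
  have xu : x != u by apply: n3; rewrite hx.
  have cpu : cp != u by apply: n3; rewrite e3.
  have cqu : cq != u by apply: n3; rewrite f3.
  have a1 : avoid e u p cp by rewrite /avoid e1 pu cpu.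
  have a2 : avoid e u cp x by rewrite /avoid esym e2 xu cpu.
  have a3 : avoid e u x cq by rewrite /avoid f2 xu cqu.
  have a4 : avoid e u cq q by rewrite /avoid esym f1 qu cqu.
  apply: (@connect_trans _ _ cp); first exact: connect1.
  apply: (@connect_trans _ _ x); first exact: connect1.
  apply: (@connect_trans _ _ cq); exact: connect1.
have [S [sW dS minS]] := minimal_sub dW.
have hS : {in S, forall s, h s = 2}.
  by move=> s /(subsetP sW); rewrite inE => /andP[/andP[/eqP ? _] _].
have mD := DS_min B hS dS (privates_of_min dS minS).
pose S' := x |: S.
have dS' : dom3 e S'.
  move=> u hu; have [s sS esu] := dS u hu; exists s => //; exact: setU1r.
have TD' := DS_TD B dS'.
apply: (unmixed_contra um mD TD').
have xS : x \notin S.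
  by apply/negP => /(subsetP sW); rewrite inE exa /= andbF.
have aN : a \notin nbhd e S.
  apply/negP => /nbhdP[t tS eta]; move: (subsetP sW t tS); rewrite inE eta /=; by rewrite andbF.
have bN : b \notin nbhd e S.
  apply/negP => /nbhdP[t tS etb]; move: (subsetP sW t tS); rewrite inE etb /=; by rewrite andbF.
have c1 := DS_card_le e S'.
have c2 := DS_card_eq B hS.
have c3 : #|S'| = #|S|.+1 by rewrite cardsU1 xS.
have aX : a \in V1 e :\: nbhd e S by rewrite in_setD aN inE ha.
have bX : b \in V1 e :\: nbhd e S by rewrite in_setD bN inE hb.
have c4 := card_D2 aX bX ab.
have sub : V1 e :\: nbhd e S' \subset ((V1 e :\: nbhd e S) :\ a) :\ b.
  apply/subsetP => q; rewrite in_setD => /andP[qN qV]; rewrite !in_setD1 in_setD.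
  have qNS : q \notin nbhd e S.
    by apply: contra qN; apply/subsetP; apply: nbhdS; exact: subsetUr.
  rewrite qNS qV !andbT; apply/andP; split; last first.
    by apply: contra qN => /eqP ->; apply/nbhdP; exists x; rewrite ?setU11.
  by apply: contra qN => /eqP ->; apply/nbhdP; exists x; rewrite ?setU11.
have c5 := subset_leq_card sub.
slia.
Qed.


Lemma caseA a x y : h a = 1 -> e a x -> e a y -> h x = 2 -> h y = 2 -> x = y.
Proof.
move=> ha eax eay hx hy; apply/eqP/negPn/negP => xy.
have conn : forall u, connect e a u by move=> u; exact: (b_conn B a u).
have DA := @dist_adj V e esym eirr acyc a conn.
have PU := @parent_uniq V e esym eirr acyc a conn.
have DP := @dist_parent V e esym eirr acyc a conn.
have D0 := @dist0 V e esym eirr acyc a conn.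
have Dr : dist conn a = 0 := @dist_r V e esym eirr acyc a conn.
have u21 := caseB.
have exa : e x a by rewrite esym.
have eya : e y a by rewrite esym.
have [z exz za] := other_nbr B (ltac:(slia) : 0 < h x) exa.
have hz : h z = 3.
  have := hle3 B z; case: (hadj B exz) => H; last slia.
  have : z = a by apply: (u21 x) => //; slia.
  by move/eqP; rewrite (negbTE za).
have [z' eyz' z'a] := other_nbr B (ltac:(slia) : 0 < h y) eya.
have hz' : h z' = 3.
  have := hle3 B z'; case: (hadj B eyz') => H; last slia.
  have : z' = a by apply: (u21 y) => //; slia.
  by move/eqP; rewrite (negbTE z'a).
have ezx : e z x by rewrite esym.
have ez'y : e z' y by rewrite esym.
have [w ezw wx] := other_nbr B (ltac:(slia) : 0 < h z) ezx.
have hw : h w = 2 := nbr_of3 hz ezw.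
have [b [ewb hb]] := hdesc B (ltac:(slia) : 0 < h w).
have hb1 : h b = 1 by slia.
have ewz : e w z by rewrite esym.
have ebw : e b w by rewrite esym.
have dx : dist conn x = 1 by case: (DA _ _ eax); slia.
have dy : dist conn y = 1 by case: (DA _ _ eay); slia.
have dz : dist conn z = 2.
  case: (DA _ _ exz) => H; first slia.
  have : z = a by apply: D0; slia.
  by move/eqP; rewrite (negbTE za).
have dz' : dist conn z' = 2.
  case: (DA _ _ eyz') => H; first slia.
  have : z' = a by apply: D0; slia.
  by move/eqP; rewrite (negbTE z'a).
have dw : dist conn w = 3.
  case: (DA _ _ ezw) => H; first slia.
  have : x = w by apply: (PU z) => //; slia.
  by move/eqP; rewrite eq_sym (negbTE wx).
have db : dist conn b = 4.
  case: (DA _ _ ewb) => H; first slia.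
  have : z = b by apply: (PU w) => //; slia.
  by move=> E; move: hz; rewrite E hb1.
pose S1 := [set s | (h s == 2) && [exists u, [&& e s u, h u == 3, (dist conn u).+1 == dist conn s, u != z & u != z']]].
have S1P s : s \in S1 -> [/\ h s = 2 & exists u, [/\ e s u, h u = 3, (dist conn u).+1 = dist conn s, u != z & u != z']].
  rewrite inE => /andP[/eqP hs /existsP[u /and5P[H1 /eqP H2 /eqP H3 H4 H5]]].
  by split => //; exists u.
have xS1 : x \notin S1.
  apply/negP => /S1P [_ [u [_ hu du _ _]]].
  have : u = a by apply: D0; slia.
  by move=> E; move: hu; rewrite E ha.
have yS1 : y \notin S1.
  apply/negP => /S1P [_ [u [_ hu du _ _]]].
  have : u = a by apply: D0; slia.
  by move=> E; move: hu; rewrite E ha.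
have F3 : forall u, h u = 3 -> u != z -> u != z' -> exists2 s, s \in S1 & e s u.
  move=> u hu uz uz'.
  have ua : u != a by apply/eqP => E; move: hu; rewrite E ha.
  have [pu [eupu dpu]] := DP u ua.
  have [c euc cpu] := other_nbr B (ltac:(slia) : 0 < h u) eupu.
  have dc : dist conn c = (dist conn u).+1.
    case: (DA _ _ euc) => // H.
    have : pu = c by apply: (PU u) => //; slia.
    by move/eqP; rewrite eq_sym (negbTE cpu).
  have hc := nbr_of3 hu euc.
  exists c; last by rewrite esym.
  rewrite inE hc eqxx /=; apply/existsP; exists u; rewrite esym euc hu eqxx /= dc eqxx uz uz'.
  done.
pose S := S1 :|: [set x; y].
have SP s : s \in S -> s \in S1 \/ s = x \/ s = y.
  by rewrite !inE => /orP[->|/orP[/eqP->|/eqP->]]; auto.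
have xS : x \in S by rewrite !inE eqxx orbT.
have yS : y \in S by rewrite !inE eqxx !orbT.
have hS : {in S, forall s, h s = 2}.
  by move=> s /SP [/S1P[]|[->|->]].
have dS : dom3 e S.
  move=> u hu; case: (eqVneq u z) => [->|uz]; first by exists x.
  case: (eqVneq u z') => [->|uz']; first by exists y.
  have [s sS1 esu] := F3 u hu uz uz'; exists s => //; by rewrite inE sS1.
have notz s : s \in S1 -> ~~ e s z.
  move=> /S1P [_ [u' [esu' hu' du' u'z _]]]; apply/negP => esz.
  case: (DA _ _ esz) => H.
    have : u' = a by apply: D0; slia.
    by move=> E; move: hu'; rewrite E ha.
  have : u' = z by apply: (PU s) => //; slia.
  by move/eqP; rewrite (negbTE u'z).
have notz' s : s \in S1 -> ~~ e s z'.
  move=> /S1P [_ [u' [esu' hu' du' _ u'z]]]; apply/negP => esz.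
  case: (DA _ _ esz) => H.
    have : u' = a by apply: D0; slia.
    by move=> E; move: hu'; rewrite E ha.
  have : u' = z' by apply: (PU s) => //; slia.
  by move/eqP; rewrite (negbTE u'z).
have eyz : ~~ e y z.
  apply/negP => eyz; have : x = y by apply: (PU z) => //; first [by rewrite esym | slia].
  by move/eqP; rewrite (negbTE xy).
have exz' : ~~ e x z'.
  apply/negP => exz'; have : y = x by apply: (PU z') => //; first [by rewrite esym | slia].
  by move/eqP; rewrite eq_sym (negbTE xy).
have priv : forall s, s \in S -> exists u, [/\ e s u, h u = 1 \/ h u = 3 &
                                  forall s', s' \in S -> e s' u -> s' = s].
  move=> s /SP [sS1|[->|->]].
  - have [us [esus hus dus _ _]] := (S1P s sS1).2.
    have hs2 : h s = 2 := (S1P s sS1).1.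
    have [c [esc hc]] := hdesc B (ltac:(rewrite hs2; done) : 0 < h s).
    have hc1 : h c = 1 by slia.
    have dc : forall t, t \in S1 -> e t c -> dist conn c = (dist conn t).+1.
      move=> t tS1 etc; have [ut [etut hut dut _ _]] := (S1P t tS1).2.
      case: (DA _ _ etc) => // H.
      have : ut = c by apply: (PU t) => //; slia.
      by move=> E; move: hut; rewrite E hc1.
    exists c; split => //; first by left.
    move=> s' /SP [s'S1|[->|->]] es'c.
    + have d1 := dc s sS1 esc; have d2 := dc s' s'S1 es'c.
      by apply: (PU c); [rewrite esym|rewrite esym|slia|slia].
    + have : c = a by apply: (u21 x) => //.
      by move=> E; move: (dc s sS1 esc); rewrite E Dr.
    + have : c = a by apply: (u21 y) => //.
      by move=> E; move: (dc s sS1 esc); rewrite E Dr.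
  - exists z; split => //; first by right.
    move=> s' /SP [s'S1|[->|->]] es'z //.
      by move: (notz s' s'S1); rewrite es'z.
    by move: eyz; rewrite es'z.
  - exists z'; split => //; first by right.
    move=> s' /SP [s'S1|[->|->]] es'z //.
      by move: (notz' s' s'S1); rewrite es'z.
    by move: exz'; rewrite es'z.
have mD := DS_min B hS dS priv.
pose S' := w |: (S :\ x).
have yS' : y \in S' by rewrite in_setU1 in_setD1 (eq_sym y x) xy yS orbT.
have wS' : w \in S' by rewrite in_setU1 eqxx.
have S1S' s : s \in S1 -> s \in S'.
  move=> sS1; rewrite in_setU1 in_setD1 (_ : s \in S) ?orbT ?andbT; last by rewrite in_setU sS1.
  by apply/orP; right; apply: contraNneq xS1 => <-.
have dS' : dom3 e S'.
  move=> u hu; case: (eqVneq u z) => [->|uz]; first by exists w; rewrite // esym.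
  case: (eqVneq u z') => [->|uz']; first by exists y; rewrite // esym.
  have [s sS1 esu] := F3 u hu uz uz'; exists s => //; exact: S1S'.
have TD' := DS_TD B dS'.
apply: (unmixed_contra um mD TD').
have bN : b \notin nbhd e S.
  apply/negP => /nbhdP[t /SP [tS1|[->|->]] etb].
  - have [ut [etut hut dut _ _]] := (S1P t tS1).2.
    case: (DA _ _ etb) => H.
      have wt : w = t by apply: (PU b) => //; first [by rewrite esym | slia].
      have [uw [ewuw huw duw uwz _]] := (S1P t tS1).2.
      rewrite -wt in ewuw duw.
      have : uw = z by apply: (PU w) => //; slia.
      by move/eqP; rewrite (negbTE uwz).
    have : ut = b by apply: (PU t) => //; slia.
    by move=> E; move: hut; rewrite E hb1.
  - have : b = a by apply: (u21 x).
    by move=> E; move: db; rewrite E Dr.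
  - have : b = a by apply: (u21 y).
    by move=> E; move: db; rewrite E Dr.
have bX : b \in V1 e :\: nbhd e S by rewrite in_setD bN inE hb1.
have sub : V1 e :\: nbhd e S' \subset (V1 e :\: nbhd e S) :\ b.
  apply/subsetP => q; rewrite in_setD => /andP[qN qV]; rewrite in_setD1 in_setD qV andbT.
  apply/andP; split.
    by apply: contra qN => /eqP ->; apply/nbhdP; exists w.
  apply/negP => /nbhdP[t tS etq]; case: (eqVneq t x) => [tx|tx].
    have qa : q = a.
      apply: (u21 x) => //; first by rewrite -tx.
      by move: qV; rewrite inE => /eqP.
    by move: qN; rewrite qa => /negP; apply; apply/nbhdP; exists y.
  by move: qN => /negP; apply; apply/nbhdP; exists t => //; rewrite in_setU1 in_setD1 tx tS orbT.
have c1 := DS_card_le e S'.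
have c2 := DS_card_eq B hS.
have c3 : #|S'| <= #|S :\ x|.+1 by rewrite cardsU1; case: (w \notin _).
have c4 : #|S| = #|S :\ x|.+1 by rewrite (cardsD1 x S) xS.
have c5 := subset_leq_card sub.
have c6 : #|V1 e :\: nbhd e S| = #|(V1 e :\: nbhd e S) :\ b|.+1 by rewrite (cardsD1 b) bX.
slia.
Qed.

Lemma e12 v : h v = 1 -> exists u, e v u /\ h u = 2.
Proof.
move=> hv; apply: NNPP => H.
have nb0 u : e v u -> h u = 0.
  move=> evu; case: (hadj B evu) => H1; first slia.
  exfalso; apply: H; exists u; split => //; slia.
pose K := v |: [set y | e v y].
have cl : forall u w, u \in K -> e u w -> w \in K.
  move=> u w; rewrite !inE => /orP[/eqP ->|evu] euw; first by rewrite euw orbT.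
  have lu : is_leaf e u by rewrite (leafE B) (nb0 u evu).
  have -> : w = v by apply: (leaf_uniq lu) => //; rewrite esym.
  by rewrite eqxx.
have [v3 h3] := b_ex3 B.
have := closed_all (setU11 v _) cl (b_conn B) v3; rewrite !inE => /orP[/eqP E|ev3].
  by move: h3; rewrite E hv.
by move: (nb0 _ ev3); rewrite h3.
Qed.

End Unmixed.

Lemma sig_of_unmixed (V : finType) (e : rel V) : Base e -> unmixed e -> Sig e.
Proof.
move=> B um; apply: Sig_intro => //.
- move=> v u1 u2 hv e1 e2 h1 h2; exact: (caseA B um hv e1 e2 h1 h2).
- move=> v hv; exact: (e12 B hv).
- move=> v u1 u2 hv e1 e2 h1 h2; exact: (caseB B um hv e1 e2 h1 h2).
Qed.

Lemma iso_of_inv (A B : finType) (e : rel A) (X : rel B) (psi : B -> A) :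
  bijective psi -> (forall p q, X p q = e (psi p) (psi q)) -> isomorphic e X.
Proof.
move=> [phi pf fp] H; exists phi; split; first by exists psi.
by move=> x y; rewrite H !fp.
Qed.

Lemma iso_trans (A B C : finType) (e1 : rel A) (e2 : rel B) (e3 : rel C) :
  isomorphic e1 e2 -> isomorphic e2 e3 -> isomorphic e1 e3.
Proof.
move=> [f [bf Hf]] [g [bg Hg]]; exists (g \o f); split; first exact: bij_comp.
by move=> x y; rewrite Hf Hg.
Qed.

Lemma attach_iso (A B : finType) (e1 : rel A) (e2 : rel B) (f : A -> B) v k (a : 'I_k) :
  bijective f -> (forall x y, e1 x y = e2 (f x) (f y)) ->
  isomorphic (attach e1 v a) (attach e2 (f v) a).
Proof.
move=> bf Hf; have fi := bij_inj bf; have [g fg gf] := bf.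
exists (fun p => match p with inl x => inl (f x) | inr i => inr i end); split.
  exists (fun p => match p with inl x => inl (g x) | inr i => inr i end).
    by case=> [x|i] //=; rewrite fg.
  by case=> [x|i] //=; rewrite gf.
case=> [x|i] [y|j] //=; by rewrite ?(inj_eq fi).
Qed.

Lemma path_map_val (V : finType) (P : pred V) (e : rel V) (x : {x : V | P x}) c :
  path (fun p q : {x : V | P x} => e (val p) (val q)) x c = path e (val x) (map val c).
Proof. by elim: c x => [|y c IH] x //=; rewrite IH. Qed.

Section Pendant.
Variable V : finType.
Variable e : rel V.
Hypothesis S : Sig e.
Local Notation h := (height e).

Variables (v : V) (k : nat) (a : 'I_k) (g : 'I_k -> V).
Hypothesis hg : forall i, h (g i) = i.
Hypothesis gcons : forall i j : 'I_k, i.+1 = j -> e (g i) (g j).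
Hypothesis eva : e v (g a).
Hypothesis cross : forall x i, e x (g i) -> (exists j, x = g j) \/ (x = v /\ i = a).
Hypothesis gv : forall i, g i != v.
Hypothesis two : exists b1 b2, [/\ b1 != b2, e v b1, e v b2, (forall i, b1 != g i) & (forall i, b2 != g i)].
Hypothesis vdesc : exists2 u, (forall i, u != g i) & (e v u /\ (h u).+1 = h v).
Hypothesis h12 : h v = 1 -> h (g a) != 2.
Hypothesis h21 : h v = 2 -> h (g a) != 1.
Hypothesis w3 : exists2 w, (forall i, w != g i) & h w = 3.
Hypothesis k0 : 0 < k.

Definition Rset := [set g i | i in 'I_k].

Lemma inR x : reflect (exists i, x = g i) (x \in Rset).
Proof. by apply: (iffP imsetP) => [[i _ ->]|[i ->]]; exists i. Qed.

Lemma notinR x : (forall i, x != g i) -> x \notin Rset.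
Proof. by move=> H; apply/negP => /inR [i /eqP]; rewrite (negbTE (H i)). Qed.

Lemma notR_nbr x y : x \notin Rset -> x != v -> e x y -> y \notin Rset.
Proof.
move=> xR xv exy; apply/negP => /inR [i yi]; rewrite yi in exy.
case: (cross exy) => [[j xj]|[xv' _]].
  by move: xR; rewrite xj => /negP; apply; apply/inR; exists j.
by move: xv; rewrite xv' eqxx.
Qed.

Lemma g_inj : injective g.
Proof. by move=> i j E; apply: val_inj; rewrite /= -(hg i) -(hg j) E. Qed.

Definition W : finType := {x : V | x \notin Rset}.
Definition e' : rel W := fun p q => e (val p) (val q).

Lemma vW : v \notin Rset.
Proof. by apply: notinR => i; rewrite eq_sym gv. Qed.

Definition v' : W := exist _ v vW.


Let B := s_base S.
Let esym := esymB B.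
Let eirr := eirrB B.
Let acyc := b_acyc B.

Lemma card_W : #|W| + k = #|V|.
Proof.
rewrite card_sig -(cardsC Rset) addnC; congr (_ + _).
  by rewrite card_imset ?card_ord //; exact: g_inj.
by apply: eq_card => x; rewrite !inE.
Qed.

Lemma W_conn_v (p : W) : connect e' p v'.
Proof.
have conn : forall u, connect e v u by move=> u; exact: (b_conn B v u).
have DP := @dist_parent V e esym eirr acyc v conn.
move: {2}(dist conn (val p)) (leqnn (dist conn (val p))) => n.
elim: n p => [|n IH] p.
  rewrite leqn0 => /eqP /(@dist0 V e esym eirr acyc v conn) pv.
  have -> : p = v' by apply: val_inj.
  exact: connect0.
move=> Hp; case: (eqVneq (val p) v) => [pv|pv].
  have -> : p = v' by apply: val_inj.
  exact: connect0.
have [q [epq hq]] := DP _ pv.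
have qR : q \notin Rset := notR_nbr (valP p) pv epq.
apply: (@connect_trans _ _ (exist _ q qR)); first exact: connect1.
apply: IH => /=; slia.
Qed.

Lemma e'sym : symmetric e'.
Proof. by move=> p q; rewrite /e' esym. Qed.

Lemma W_conn : connected_graph e'.
Proof.
move=> p q; apply: (@connect_trans _ _ v'); first exact: W_conn_v.
by rewrite (sym_connect_sym e'sym); exact: W_conn_v.
Qed.

Lemma W_nbrset (p : W) : #|[set q : W | e' p q]| = #|[set y | e (val p) y & y \notin Rset]|.
Proof.
rewrite -(card_imset _ val_inj); apply: eq_card => y; rewrite [in RHS]inE.
apply/imsetP/andP => [[q]|[H1 H2]]; first by rewrite inE => H ->; split => //; exact: (valP q).
by exists (exist (fun x => x \notin Rset) y H2); rewrite // inE.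
Qed.

Lemma W_deg (p : W) : val p != v -> deg e' p = deg e (val p).
Proof.
move=> pv; rewrite /deg W_nbrset; apply: eq_card => y; rewrite !inE.
case E: (e (val p) y) => //=; exact: notR_nbr (valP p) pv E.
Qed.

Lemma v_deg : 1 < deg e' v'.
Proof.
have [b1 [b2 [b12 e1 e2 n1 n2]]] := two.
rewrite /deg W_nbrset /=; apply: (@leq_trans #|[set b1; b2]|); first by rewrite cards2 b12.
apply: subset_leq_card; apply/subsetP => y; rewrite !inE => /orP[/eqP->|/eqP->]; by rewrite ?e1 ?e2 notinR.
Qed.

Lemma hv_pos : 0 < h v.
Proof. by have [u _ [_ hu]] := vdesc; rewrite -hu. Qed.

Lemma W_height (p : W) : height e' p = h (val p).
Proof.
apply: (height_char (h:= fun p : W => h (val p))) => {p}.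
- move=> p; case: (eqVneq (val p) v) => [pv|pv].
    have [b1 [b2 [_ e1 _ n1 _]]] := two.
    by exists (exist _ b1 (notinR n1)); rewrite /e' pv.
  have [y py] := has_nbr B (val p).
  by exists (exist _ y (notR_nbr (valP p) pv py)).
- move=> p; case: (eqVneq (val p) v) => [pv|pv].
    have -> : p = v' by apply: val_inj.
    have := v_deg; have := hv_pos; rewrite /is_leaf /= => hv dg; split => [H0|/eqP H0]; slia.
  by rewrite /is_leaf W_deg // -/(is_leaf e (val p)) (leafE B); split => [->|/eqP].
- move=> p hp; case: (eqVneq (val p) v) => [pv|pv].
    have [u un [evu hu]] := vdesc.
    by exists (exist _ u (notinR un)); rewrite /e' pv.
  have [y [py hy]] := hdesc B hp.
  by exists (exist _ y (notR_nbr (valP p) pv py)).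
- move=> p q; rewrite /e' => epq; case: (hadj B epq); slia.
Qed.

Lemma W_acyc : acyclic e'.
Proof.
move=> c uc sc; have := acyc (c:= map val c); rewrite size_map (map_inj_uniq val_inj) uc sc.
move=> /(_ isT isT); case: c {uc sc} => [|x c] //=.
by rewrite path_map_val map_rcons.
Qed.

Lemma W_sig : Sig e'.
Proof.
have hE := W_height.
split; first split.
- exact: e'sym.
- by move=> p; rewrite /e' eirr.
- exact: W_acyc.
- exact: W_conn.
- by move=> p; rewrite hE; exact: (hle3 B (val p)).
- by move=> p q epq; rewrite !hE; exact: (hadj B epq).
- move=> p; rewrite hE => hp; case: (eqVneq (val p) v) => [pv|pv].
    by move: hv_pos; rewrite -pv hp.
  by rewrite /is_leaf W_deg // -/(is_leaf e (val p)) (leafE B) hp.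
- move=> p; rewrite hE => hp; case: (eqVneq (val p) v) => [pv|pv].
    have [u un [evu hu]] := vdesc.
    by exists (exist _ u (notinR un)); rewrite /e' hE pv.
  have [y [py hy]] := hdesc B hp.
  by exists (exist _ y (notR_nbr (valP p) pv py)); rewrite hE.
- have [w wn hw] := w3; by exists (exist _ w (notinR wn)); rewrite hE.
- move=> p q1 q2; rewrite !hE => hp e1 e2 h1 h2; apply: val_inj; exact: (s_u12 S hp e1 e2 h1 h2).
- move=> p; rewrite !hE => hp; have [u [pu hu]] := s_e12 S hp.
  have uR : u \notin Rset.
    apply/negP => /inR [i ui]; rewrite ui in pu hu.
    case: (cross pu) => [[j pj]|[pv ia]].
      by move: (valP p); rewrite pj => /negP; apply; apply/inR; exists j.
    by move: hp; rewrite pv => /h12; rewrite -ia hu.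
  by exists (exist _ u uR); rewrite hE.
- move=> p q1 q2; rewrite !hE => hp e1 e2 h1 h2; apply: val_inj; exact: (s_u21 S hp e1 e2 h1 h2).
Qed.


Definition psi (P : (W + 'I_k)%type) : V := match P with inl p => val p | inr i => g i end.

Lemma psi_bij : bijective psi.
Proof.
apply: inj_card_bij; last by rewrite card_sum card_ord card_W.
case=> [p|i] [q|j] //= E.
- by congr inl; apply: val_inj.
- by move: (valP p) => /= /negP; case; apply/inR; exists j.
- by move: (valP q) => /= /negP; case; apply/inR; exists i.
- by congr inr; exact: g_inj.
Qed.

Lemma eqv' (p : W) : (p == v') = (val p == v).
Proof. by rewrite -val_eqE. Qed.

Lemma psi_edge P Q : attach e' v' a P Q = e (psi P) (psi Q).
Proof.
case: P => [p|i]; case: Q => [q|j] //=.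
- rewrite eqv'; apply/idP/idP => [/andP[/eqP -> /eqP ->] //|epj].
  case: (cross epj) => [[j' pj]|[pv ia]]; last by apply/andP; split; apply/eqP; [exact: pv|exact: ia].
  by move: (valP p) => /= /negP; case; apply/inR; exists j'.
- rewrite eqv' esym; apply/idP/idP => [/andP[/eqP -> /eqP ->] //|epj].
  case: (cross epj) => [[j' pj]|[pv ia]]; last by apply/andP; split; apply/eqP; [exact: ia|exact: pv].
  by move: (valP q) => /= /negP; case; apply/inR; exists j'.
- rewrite /path_rel; apply/idP/idP => [/orP[/eqP H|/eqP H]|eij].
    exact: gcons.
  by rewrite esym; exact: gcons.
  case: (hadj B eij); rewrite !hg => ->; by rewrite eqxx ?orbT.
Qed.

Lemma pendant_main : exists (W : finType) (e' : rel W) (v' : W),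
  [/\ Sig e', #|W| < #|V|, height e' v' = height e v & isomorphic e (attach e' v' a)].
Proof.
exists W, e', v'; split.
- exact: W_sig.
- have := card_W; slia.
- by rewrite W_height.
- exact: iso_of_inv psi_bij psi_edge.
Qed.

End Pendant.

Definition IHtype (n : nat) := forall (V : finType) (e : rel V), #|V| <= n -> Sig e ->
  exists (W : finType) (e' : rel W), O_reach e' /\ isomorphic e e'.

Lemma transfer n (V : finType) (e : rel V) k (a : 'I_k) hv :
  IHtype n ->
  (forall (W : finType) (e1 : rel W) x, O_reach e1 -> height e1 x = hv -> O_reach (attach e1 x a)) ->
  forall v, (exists (W : finType) (e' : rel W) (v' : W),
    [/\ Sig e', #|W| < #|V|, height e' v' = height e v & isomorphic e (attach e' v' a)]) ->
  height e v = hv -> #|V| <= n.+1 ->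
  exists (W : finType) (e' : rel W), O_reach e' /\ isomorphic e e'.
Proof.
move=> IH Ostep v [W0 [e0 [v0 [S0 c0 h0 iso0]]]] hvv cV.
have [W1 [e1 [O1 [f [bf Hf]]]]] := IH W0 e0 (ltac:(slia)) S0.
exists (W1 + 'I_k)%type, (attach e1 (f v0) a); split.
  apply: Ostep => //; by rewrite -(height_iso bf Hf) h0 hvv.
apply: iso_trans iso0 _; exact: attach_iso.
Qed.

Lemma Ostep1 (W : finType) (e1 : rel W) x : O_reach e1 -> height e1 x = 1 ->
  O_reach (attach e1 x (@Ordinal 1 0 isT)).
Proof. move=> O hx; exact: (OR_h1 O hx). Qed.
Lemma Ostep2 (W : finType) (e1 : rel W) x : O_reach e1 -> height e1 x = 2 ->
  O_reach (attach e1 x (@Ordinal 4 3 isT)).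
Proof. move=> O hx; exact: (OR_h2 O hx). Qed.
Lemma Ostep3 (W : finType) (e1 : rel W) x : O_reach e1 -> height e1 x = 3 ->
  O_reach (attach e1 x (@Ordinal 3 2 isT)).
Proof. move=> O hx; exact: (OR_h3 O hx). Qed.

Section Step.
Variable n : nat.
Hypothesis IH : IHtype n.
Variable V : finType.
Variable e : rel V.
Hypothesis S : Sig e.
Hypothesis cV : #|V| <= n.+1.
Local Notation h := (height e).
Let B := s_base S.
Let esym := esymB B.
Let eirr := eirrB B.
Let acyc := b_acyc B.

Lemma neq_h u w : h u <> h w -> u != w.
Proof. by move=> H; apply/eqP => E; apply: H; rewrite E. Qed.

Definition GoalT := exists (W : finType) (e' : rel W), O_reach e' /\ isomorphic e e'.

Lemma caseR1 s l1 l2 : h s = 1 -> e s l1 -> e s l2 -> l1 != l2 -> h l1 = 0 -> h l2 = 0 -> GoalT.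
Proof.
move=> hs e1 e2 l12 h1 h2.
have [x2 [esx2 hx2]] := s_e12 S hs.
have [v3 hv3] := b_ex3 B.
apply: (transfer (a := @Ordinal 1 0 isT) (hv := 1) IH (@Ostep1) (v := s) _ hs cV).
apply: (@pendant_main V e S s 1 (@Ordinal 1 0 isT) (fun _ => l1)) => //.
- by move=> [[|i] Hi].
- by move=> [[|i] Hi] [[|j] Hj].
- move=> z i ezl; right; split; last by apply: val_inj; case: i => [[|i] Hi].
  have ll : is_leaf e l1 by rewrite (leafE B) h1.
  by apply: (leaf_uniq ll); rewrite esym.
- by move=> _; apply: neq_h; rewrite h1 hs.
- exists l2, x2; split => //.
  + by apply: neq_h; rewrite h2 hx2.
  + by move=> _; rewrite eq_sym.
  + by move=> _; apply: neq_h; rewrite h1 hx2.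
- by exists l2; [move=> _; rewrite eq_sym|split; [|rewrite h2 hs]].
- by rewrite h1.
- by rewrite hs.
- by exists v3; [move=> _; apply: neq_h; rewrite hv3 h1|].
Qed.


Section R2.
Hypothesis noR1 : forall s l1 l2, h s = 1 -> e s l1 -> e s l2 -> h l1 = 0 -> h l2 = 0 -> l1 = l2.
Variables m s x y : V.
Hypotheses (hm : h m = 0) (hs : h s = 1) (hx : h x = 2) (hy : h y = 3).
Hypotheses (ems : e m s) (esx : e s x) (exy : e x y).
Hypothesis Nm : forall t, e m t -> t = s.
Hypothesis Ns : forall t, e s t -> t = m \/ t = x.
Hypothesis Nx : forall t, e x t -> t = s \/ t = y.

Lemma R2a x' x3 : e y x' -> e y x3 -> x' != x -> x3 != x -> x3 != x' -> GoalT.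
Proof using All.
move=> eyx' eyx3 x'x x3x x3x'.
have hx' : h x' = 2 := nbr_of3 B hy eyx'.
have hx3 : h x3 = 2 := nbr_of3 B hy eyx3.
apply: (transfer (a := @Ordinal 3 2 isT) (hv := 3) IH (@Ostep3) (v := y) _ hy cV).
apply: (@pendant_main V e S y 3 (@Ordinal 3 2 isT) (fun i : 'I_3 => nth m [:: m; s; x] i)).
- by move=> [[|[|[|i]]] Hi].
- by move=> [[|[|[|i]]] Hi] [[|[|[|j]]] Hj] //= [].
- by rewrite /= esym.
- move=> z [[|[|[|i]]] Hi] //= ez.
  + by left; exists (@Ordinal 3 1 isT); apply: Nm; rewrite esym.
  + have : e s z by rewrite esym.
    by case/Ns => ->; left; [exists (@Ordinal 3 0 isT)|exists (@Ordinal 3 2 isT)].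
  + have : e x z by rewrite esym.
    case/Nx => ->; first by left; exists (@Ordinal 3 1 isT).
    by right; split => //; apply: val_inj.
- by move=> [[|[|[|i]]] Hi] //=; apply: neq_h; rewrite hy ?hm ?hs ?hx.
- exists x', x3; split => //; first by rewrite eq_sym.
  + by move=> [[|[|[|i]]] Hi] //=; apply: neq_h; rewrite hx' ?hm ?hs ?hx.
  + by move=> [[|[|[|i]]] Hi] //=; apply: neq_h; rewrite hx3 ?hm ?hs ?hx.
- by exists x'; [move=> [[|[|[|i]]] Hi] //=; apply: neq_h; rewrite hx' ?hm ?hs ?hx|rewrite hx' hy].
- by rewrite hy.
- by rewrite hy.
- by exists y; [move=> [[|[|[|i]]] Hi] //=; apply: neq_h; rewrite hy ?hm ?hs ?hx|].
- by [].
Qed.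

Lemma R2b1 x' y2 : e y x' -> x' != x -> (forall t, e y t -> t = x \/ t = x') ->
  e x' y2 -> y2 != y -> h y2 = 3 -> GoalT.
Proof using All.
move=> eyx' x'x Ny ex'y2 y2y hy2.
have hx' : h x' = 2 := nbr_of3 B hy eyx'.
have [s' [ex's' hs']] := hdesc B (ltac:(rewrite hx'; done) : 0 < h x').
have hs1 : h s' = 1 by slia.
have s's : s' != s.
  apply/eqP => E; have : e s x' by rewrite -E esym.
  case/Ns => F; first by move: hx'; rewrite F hm.
  by move: x'x; rewrite F eqxx.
apply: (transfer (a := @Ordinal 4 3 isT) (hv := 2) IH (@Ostep2) (v := x') _ hx' cV).
apply: (@pendant_main V e S x' 4 (@Ordinal 4 3 isT) (fun i : 'I_4 => nth m [:: m; s; x; y] i)).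
- by move=> [[|[|[|[|i]]]] Hi].
- by move=> [[|[|[|[|i]]]] Hi] [[|[|[|[|j]]]] Hj] //= [].
- by rewrite /= esym.
- move=> z [[|[|[|[|i]]]] Hi] //= ez.
  + by left; exists (@Ordinal 4 1 isT); apply: Nm; rewrite esym.
  + have : e s z by rewrite esym.
    by case/Ns => ->; left; [exists (@Ordinal 4 0 isT)|exists (@Ordinal 4 2 isT)].
  + have : e x z by rewrite esym.
    by case/Nx => ->; left; [exists (@Ordinal 4 1 isT)|exists (@Ordinal 4 3 isT)].
  + have : e y z by rewrite esym.
    case/Ny => ->; first by left; exists (@Ordinal 4 2 isT).
    by right; split => //; apply: val_inj.
- move=> [[|[|[|[|i]]]] Hi] //=; try (by apply: neq_h; rewrite hx' ?hm ?hs ?hy).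
  by rewrite eq_sym.
- exists s', y2; split => //; first by apply: neq_h; rewrite hs1 hy2.
  + by move=> [[|[|[|[|i]]]] Hi] //=; apply: neq_h; rewrite hs1 ?hm ?hx ?hy.
  + by move=> [[|[|[|[|i]]]] Hi] //=; apply: neq_h; rewrite hy2 ?hm ?hs ?hx.
- exists s'; last by rewrite hs1 hx'.
  by move=> [[|[|[|[|i]]]] Hi] //=; apply: neq_h; rewrite hs1 ?hm ?hx ?hy.
- by rewrite hx'.
- by rewrite /= hy.
- by exists y2; [move=> [[|[|[|[|i]]]] Hi] //=; apply: neq_h; rewrite hy2 ?hm ?hs ?hx|].
- by [].
Qed.

Lemma R2b2 x' : e y x' -> x' != x -> (forall t, e y t -> t = x \/ t = x') ->
  (forall t, e x' t -> h t = 3 -> t = y) -> GoalT.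
Proof using All.
move=> eyx' x'x Ny Nx'3.
have hx' : h x' = 2 := nbr_of3 B hy eyx'.
have [s' [ex's' hs']] := hdesc B (ltac:(rewrite hx'; done) : 0 < h x').
have hs1 : h s' = 1 by slia.
have [m' [es'm' hm']] := hdesc B (ltac:(rewrite hs1; done) : 0 < h s').
have hm0 : h m' = 0 by slia.
have Nx' : forall t, e x' t -> t = y \/ t = s'.
  move=> t et; case: (hadj B et) => H.
    by right; apply: (s_u21 S hx' et ex's') => //; slia.
  by left; apply: Nx'3 => //; slia.
have es'x' : e s' x' by rewrite esym.
have Ns' : forall t, e s' t -> t = x' \/ t = m'.
  move=> t et; case: (hadj B et) => H.
    by right; apply: (noR1 hs1 et es'm') => //; slia.
  by left; apply: (s_u12 S hs1 et es'x') => //; slia.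
have lm' : is_leaf e m' by rewrite (leafE B) hm0.
have Nm' : forall t, e m' t -> t = s' \/ t = s'.
  by move=> t et; left; apply: (leaf_uniq lm') => //; rewrite esym.
have Nm2 : forall t, e m t -> t = s \/ t = s by move=> t /Nm; left.
have Ny2 : forall t, e y t -> t = x \/ t = x' := Ny.
have xx' : x != x' by rewrite eq_sym.
have ss' : s != s'.
  apply/eqP => E; have : e s x' by rewrite E esym.
  case/Ns => F; first by move: hx'; rewrite F hm.
  by move: x'x; rewrite F eqxx.
have mm' : m != m'.
  apply/eqP => E; have : e m s' by rewrite E esym.
  by move/Nm => F; move: ss'; rewrite F eqxx.
Ltac hrw := repeat match goal with H : height _ _ = _ |- _ => progress rewrite H end.
Ltac vneq F := first [ (have := congr1 (height e) F; hrw; by move/eqP)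
                     | (match goal with H : is_true (?a != ?b) |- _ => by move: H; rewrite F eqxx end) ].
have Hinj : injective (fun i : 'I_7 => nth m [:: m; s; x; y; x'; s'; m'] i).
  move=> [[|[|[|[|[|[|[|i]]]]]]] Hi] [[|[|[|[|[|[|[|j]]]]]]] Hj] //= F;
  first [ by apply: val_inj | vneq F ].
have Hedge : forall i j : 'I_7, P6 i j = e (nth m [:: m; s; x; y; x'; s'; m'] i) (nth m [:: m; s; x; y; x'; s'; m'] j).
  move=> i j; rewrite /P6 /path_rel.
  case: i => [[|[|[|[|[|[|[|i]]]]]]] Hi]; case: j => [[|[|[|[|[|[|[|j]]]]]]] Hj] //=;
  symmetry; first [ (match goal with |- _ = ?r => have -> : r = true by [] end; by [|rewrite esym])
        | (match goal with |- _ = ?r => have -> : r = false by [] end; apply/negbTE/negP => E;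
           first [case: (@Nm2 _ E) | case: (@Ns _ E) | case: (@Nx _ E) | case: (@Ny2 _ E)
                 | case: (@Nx' _ E) | case: (@Ns' _ E) | case: (@Nm' _ E)] => F; vneq F) ].
have allL : forall v, v \in [set u | u \in [:: m; s; x; y; x'; s'; m']].
  apply: (@closed_all V e _ m); first by rewrite !inE eqxx.
    move=> u w; rewrite !inE => Hu euw.
    repeat (case/orP: Hu => [/eqP E|Hu]; [subst u; first [case: (@Nm2 _ euw) | case: (@Ns _ euw) | case: (@Nx _ euw) | case: (@Ny2 _ euw)
                 | case: (@Nx' _ euw) | case: (@Ns' _ euw) | case: (@Nm' _ euw)] => ->; by rewrite !eqxx ?orbT|]).
    move/eqP: Hu => E; subst u; case: (@Nm' _ euw) => ->; by rewrite !eqxx ?orbT.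
  exact: (b_conn B).
exists _, P6; split; first exact: OR_base.
apply: (iso_of_inv _ Hedge); apply: inj_card_bij Hinj _.
rewrite card_ord; apply: leq_trans (card_size [:: m; s; x; y; x'; s'; m']).
apply: subset_leq_card; apply/subsetP => v _; have := allL v; by rewrite inE.
Qed.

End R2.

Lemma caseR2 : (forall s l1 l2, h s = 1 -> e s l1 -> e s l2 -> h l1 = 0 -> h l2 = 0 -> l1 = l2) -> GoalT.
Proof.
move=> noR1.
have [r hr] := b_ex3 B.
have conn : forall u, connect e r u by move=> u; exact: (b_conn B r u).
have DA := @dist_adj V e esym eirr acyc r conn.
have PU := @parent_uniq V e esym eirr acyc r conn.
have DP := @dist_parent V e esym eirr acyc r conn.
have [q erq] := has_nbr B r.
have [m [mr mmax]] := @far_vertex V e esym eirr acyc r conn (ex_intro _ q erq).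
have lm := @far_leaf V e esym eirr acyc r conn m mr mmax.
have hm : h m = 0 := leaf_height0 lm.
have [s [ems dsm]] := DP m mr.
have hs : h s = 1 by case: (hadj B ems); slia.
have Nm : forall t, e m t -> t = s by move=> t emt; exact: (leaf_uniq lm emt ems).
have sr : s != r by apply: neq_h; rewrite hs hr.
have [x [esx dxs]] := DP s sr.
have esm : e s m by rewrite esym.
have hx : h x = 2.
  case: (hadj B esx) => H; last slia.
  have xm : x = m by apply: (noR1 s) => //; slia.
  by move: dxs dsm; rewrite xm; slia.
have xr : x != r by apply: neq_h; rewrite hx hr.
have [y [exy dyx]] := DP x xr.
have exs : e x s by rewrite esym.
have hy : h y = 3.
  case: (hadj B exy) => H; last slia.
  have ys : y = s by apply: (s_u21 S hx exy exs) => //; slia.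
  by move: dyx dxs; rewrite ys; slia.
have Ns : forall t, e s t -> t = m \/ t = x.
  move=> t est; case: (hadj B est) => H.
    by left; apply: (noR1 s) => //; slia.
  by right; apply: (s_u12 S hs est esx) => //; slia.
have Nx : forall t, e x t -> t = s \/ t = y.
  move=> t ext; case: (hadj B ext) => H.
    by left; apply: (s_u21 S hx ext exs) => //; slia.
  have ht : h t = 3 by slia.
  right; apply/eqP/negPn/negP => ty.
  have dt : dist conn t = (dist conn x).+1.
    case: (DA _ _ ext) => // H2.
    have : y = t by apply: (PU x) => //; slia.
    by move=> E; move: ty; rewrite E eqxx.
  have etx : e t x by rewrite esym.
  have [c etc cx] := other_nbr B (ltac:(rewrite ht; done) : 0 < h t) etx.
  have dc : dist conn c = (dist conn t).+1.
    case: (DA _ _ etc) => // H2.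
    have : x = c by apply: (PU t) => //; slia.
    by move=> E; move: cx; rewrite E eqxx.
  have hc : h c = 2 := nbr_of3 B ht etc.
  have [q' [ecq hq]] := hdesc B (ltac:(rewrite hc; done) : 0 < h c).
  have dq : dist conn q' = (dist conn c).+1.
    case: (DA _ _ ecq) => // H2.
    have : t = q' by apply: (PU c); [by rewrite esym|exact: ecq|slia|slia].
    by move=> E; move: hq; rewrite -E ht hc => /eqP.
  have := mmax q'; slia.
have eyx : e y x by rewrite esym.
have [x' eyx' x'x] := other_nbr B (ltac:(rewrite hy; done) : 0 < h y) eyx.
case: (classic (exists x3, [/\ e y x3, x3 != x & x3 != x'])) => [[x3 [eyx3 x3x x3x']]|H3].
  exact: (R2a noR1 hm hs hx hy ems esx exy Nm Ns Nx eyx' eyx3 x'x x3x x3x').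
have Ny : forall t, e y t -> t = x \/ t = x'.
  move=> t eyt; case: (eqVneq t x) => [->|tx]; first by left.
  case: (eqVneq t x') => [->|tx']; first by right.
  by exfalso; apply: H3; exists t.
case: (classic (exists y2, [/\ e x' y2, y2 != y & h y2 = 3])) => [[y2 [ex'y2 y2y hy2]]|H4].
  exact: (R2b1 noR1 hm hs hx hy ems esx exy Nm Ns Nx eyx' x'x Ny ex'y2 y2y hy2).
apply: (R2b2 noR1 hm hs hx hy ems esx exy Nm Ns Nx eyx' x'x Ny).
move=> t ex't ht; apply/eqP/negPn/negP => ty; apply: H4; by exists t.
Qed.

Lemma step : GoalT.
Proof.
case: (classic (exists s l1 l2, [/\ h s = 1, e s l1, e s l2, l1 != l2 & h l1 = 0 /\ h l2 = 0])).
  by move=> [s [l1 [l2 [hs e1 e2 l12 [h1 h2]]]]]; exact: (caseR1 hs e1 e2 l12 h1 h2).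
move=> H; apply: caseR2 => s l1 l2 hs e1 e2 h1 h2.
apply/eqP/negPn/negP => l12; apply: H; by exists s, l1, l2.
Qed.
End Step.

Lemma main_ind n : IHtype n.
Proof.
elim: n => [|n IH] V e cV S.
  have [v _] := b_ex3 (s_base S).
  by have := cV; rewrite leqn0 => /eqP /card0_eq /(_ v); rewrite inE.
exact: (step IH S cV).
Qed.


Theorem theorem3p54 (T : finType) (e : rel T) :
  is_tree e -> unmixed e -> balanced e -> graph_height e = 3 ->
  isomorphic e P6 \/
  exists (V : finType) (e' : rel V), O_reach e' /\ isomorphic e e'.
Proof.
move=> tr um bal gh; right.
have B := base_of_tree tr bal gh.
have S := sig_of_unmixed B um.
exact: (@main_ind #|T| T e (leqnn _) S).
Qed.
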